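(* Let $N\ge 2$ and $u>0$. For every $x$ with $0\le x<1$ there exists a neutral evolutionary model on $N$ sites (a replacement rule $p$ satisfying the fixation assumption described in the context) whose overall fixation probability $\rho=\frac{1}{B}\sum_{i=1}^N d_i\rho_i$ equals $x$. Consequently, the molecular clock rate $K=Nu\rho$ can take any value in $[0,Nu)$.
   Context: There are $N$ sites $1,\ldots,N$, each always occupied by one individual of type M (mutant) or R (resident); a state is $\mathbf{s}\in\{\mathrm{M},\mathrm{R}\}^N$. A replacement event is a pair $(R,\alpha)$ with $R\subseteq\{1,\ldots,N\}$ and $\alpha:R\to\{1,\ldots,N\}$. A replacement rule is a probability distribution $p(R,\alpha)$ on replacement events, independent of the state. The evolutionary Markov chain: at each time-step an event $(R,\alpha)$ is drawn with probability $p(R,\alpha)$ and the new state is $s_i'=s_i$ if $i\notin R$, $s_i'=s_{\alpha(i)}$ if $i\in R$. Fixation assumption: there exist a site $i$ and a finite sequence of replacement events, each of positive probability, such that if these events occur consecutively (from any initial state) every site ends up carrying the type initially at site $i$. Define $e_{ij}=\sum_{(R,\alpha):\, j\in R,\ \alpha(j)=i}p(R,\alpha)$, $b_i=\sum_j e_{ij}$, $d_i=\sum_j e_{ji}$, $B=\sum_{i,j}e_{ij}$. The site-specific fixation probability $\rho_i$ is the probability that the chain started from the state with M at site $i$ and R elsewhere is eventually absorbed in $(\mathrm{M},\ldots,\mathrm{M})$. *)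

(* Defs.v *)
From HB Require Import structures.
From mathcomp Require Import all_boot all_order all_algebra.
From mathcomp Require Import all_classical all_reals all_analysis.
Set Implicit Arguments. Unset Strict Implicit. Unset Printing Implicit Defensive.
Import Order.TTheory GRing.Theory Num.Theory.
Import numFieldNormedType.Exports.
Local Open Scope ring_scope.

(* Sites are 'I_N. A state assigns to each site a type: true = M (mutant),
   false = R (resident). *)
Definition state (N : nat) := {ffun 'I_N -> bool}.

(* A replacement event (R, alpha): R a set of sites, alpha the parent map.
   alpha is represented as a total map 'I_N -> 'I_N; only its values on R
   matter. *)
Definition event (N : nat) := ({set 'I_N} * {ffun 'I_N -> 'I_N})%type.

Definition apply_event (N : nat) (ev : event N) (s : state N) : state N :=
  [ffun i => if i \in ev.1 then s (ev.2 i) else s i].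

Definition is_replacement_rule (R : realType) (N : nat) (p : {ffun event N -> R}) :=
  (forall ev, 0 <= p ev) /\ \sum_(ev : event N) p ev = 1.

Definition apply_events (N : nat) (evs : seq (event N)) (s : state N) : state N :=
  foldl (fun t ev => apply_event ev t) s evs.

Definition fixation_assumption (R : realType) (N : nat) (p : {ffun event N -> R}) :=
  exists (i : 'I_N) (evs : seq (event N)),
    (forall ev, ev \in evs -> 0 < p ev) /\
    (forall s : state N, forall j : 'I_N, apply_events evs s j = s i).

Definition trans (R : realType) (N : nat) (p : {ffun event N -> R})
  (s s' : state N) : R :=
  \sum_(ev : event N | apply_event ev s == s') p ev.

Fixpoint nstep (R : realType) (N : nat) (p : {ffun event N -> R}) (n : nat)
  (s s' : state N) : R :=
  match n with
  | 0 => (s == s')%:R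
  | n'.+1 => \sum_(t : state N) trans p s t * nstep p n' t s'
  end.

Definition allM (N : nat) : state N := [ffun => true].
Definition single (N : nat) (i : 'I_N) : state N := [ffun j => j == i].

(* Since (M,...,M) is absorbing,
   the event "eventually absorbed" is the increasing union of the events
   "in (M,...,M) at time n", so its probability is the limit of the n-step
   probabilities. *)
Definition rho_site (R : realType) (N : nat) (p : {ffun event N -> R}) (i : 'I_N) : R :=
  limn (fun n => nstep p n (single i) (allM N)).

Definition e_rate (R : realType) (N : nat) (p : {ffun event N -> R}) (i j : 'I_N) : R :=
  \sum_(ev : event N | (j \in ev.1) && (ev.2 j == i)) p ev.
Definition b_rate (R : realType) (N : nat) (p : {ffun event N -> R}) (i : 'I_N) : R :=
  \sum_j e_rate p i j.
Definition d_rate (R : realType) (N : nat) (p : {ffun event N -> R}) (i : 'I_N) : R :=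
  \sum_j e_rate p j i.
Definition B_total (R : realType) (N : nat) (p : {ffun event N -> R}) : R :=
  \sum_i \sum_j e_rate p i j.

Definition rho_overall (R : realType) (N : nat) (p : {ffun event N -> R}) : R :=
  (B_total p)^-1 * \sum_i d_rate p i * rho_site p i.

(* Main.v *)
Require Import Defs.
From HB Require Import structures.
From mathcomp Require Import all_boot all_order all_algebra.
From mathcomp Require Import all_classical all_reals all_analysis.
From mathcomp Require Import ring lra.
Import Order.TTheory GRing.Theory Num.Theory.
Import numFieldNormedType.Exports.
Local Open Scope ring_scope.

Section Constr.
Variables (R : realType) (n : nat) (q : R).
Let N := n.+2.
Let i0 : 'I_N := ord0.
Definition ev0 : event N := ([set~ i0], [ffun=> i0]).
Definition evA : event N := ([set i0], [ffun k => k]).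
Definition pq : {ffun event N -> R} :=
  [ffun ev => (1 - q) * (ev == ev0)%:R + q * (ev == evA)%:R].

Lemma ev0A : ev0 != evA.
Proof.
apply/negP => /eqP [] /setP /(_ i0); by rewrite !inE eqxx.
Qed.

Lemma sum_ind (T : finType) (P : pred T) (a : T) :
  \sum_(t | P t) ((t == a)%:R : R) = (P a)%:R.
Proof.
rewrite big_mkcond /= (bigD1 a) //= eqxx big1 ?addr0.
  by case: (P a).
by move=> t /negbTE ->; case: (P t).
Qed.

Lemma sum_pq (P : pred (event N)) :
  \sum_(ev | P ev) pq ev = (1 - q) * (P ev0)%:R + q * (P evA)%:R.
Proof.
under eq_bigr do rewrite ffunE.
by rewrite big_split /= -!mulr_sumr !sum_ind.
Qed.

Lemma sum_dirac (T : finType) (x : T) (g : T -> R) :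
  \sum_t (x == t)%:R * g t = g x.
Proof.
rewrite (bigD1 x) //= eqxx mul1r big1 ?addr0 // => t /negbTE.
by rewrite eq_sym => ->; rewrite mul0r.
Qed.

Definition fmap (s : state N) := apply_event ev0 s.

Lemma applyA s : apply_event evA s = s.
Proof. by apply/ffunP => k; rewrite ffunE /= ffunE; case: ifP. Qed.

Lemma nstepS m s s' :
  nstep pq m.+1 s s' = (1 - q) * nstep pq m (fmap s) s' + q * nstep pq m s s'.
Proof.
rewrite /=.
under eq_bigr do rewrite /trans sum_pq applyA mulrDl -!mulrA.
by rewrite big_split /= -!mulr_sumr !sum_dirac.
Qed.

Lemma fmap_allM : fmap (allM N) = allM N.
Proof. by apply/ffunP => k; rewrite !ffunE; case: ifP. Qed.

Lemma nstep_allM m : nstep pq m (allM N) (allM N) = 1.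
Proof.
elim: m => [|m IH]; first by rewrite /= eqxx.
by rewrite nstepS fmap_allM IH !mulr1 subrK.
Qed.

Lemma nstep_false m (s : state N) : s i0 = false -> nstep pq m s (allM N) = 0.
Proof.
elim: m s => [|m IH] s Hs.
  rewrite /=; case: eqP => // E; by move: Hs; rewrite E ffunE.
rewrite nstepS !IH ?mulr0 ?addr0 //.
by rewrite /fmap /apply_event ffunE /= !inE eqxx /=.
Qed.

Lemma fmap_single : fmap (single i0) = allM N.
Proof. apply/ffunP => k; rewrite !ffunE /= !inE; case: ifP => H; rewrite ?ffunE ?eqxx //; exact/negbFE. Qed.

Lemma nstep_single m : nstep pq m (single i0) (allM N) = 1 - q ^+ m.
Proof.
elim: m => [|m IH].
  rewrite /= expr0 subrr; case: eqP => // /ffunP /(_ (lift i0 ord0)).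
  by rewrite !ffunE.
by rewrite nstepS fmap_single nstep_allM IH exprS; ring.
Qed.

Lemma rho_i0 : 0 <= q < 1 -> rho_site pq i0 = 1.
Proof.
move=> /andP [q0 q1].
rewrite /rho_site (_ : (fun m => _) = (fun m => 1 - q ^+ m)); last first.
  by apply: funext => m; rewrite nstep_single.
have Hq : `|q| < 1 by rewrite ger0_norm.
have H := cvgB (cvg_cst (1:R)) (cvg_expr Hq); rewrite subr0 in H.
by apply: cvg_lim => //; apply: H.
Qed.

Lemma rho_j j : j != i0 -> rho_site pq j = 0.
Proof.
move=> Hj; rewrite /rho_site (_ : (fun m => _) = (fun m => 0)).
  exact: lim_cst.
apply: funext => m; apply: nstep_false; by rewrite ffunE eq_sym (negbTE Hj).
Qed.

Lemma e_rate_eq i j : e_rate pq i j =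
  (1 - q) * ((j != i0) && (i0 == i))%:R + q * ((j == i0) && (j == i))%:R.
Proof. by rewrite /e_rate sum_pq /= !inE !ffunE. Qed.

Lemma d_i0 : d_rate pq i0 = q.
Proof.
rewrite /d_rate (bigD1 i0) //= big1 ?addr0.
  by rewrite e_rate_eq eqxx /= mulr0 add0r mulr1.
move=> j Hj; rewrite e_rate_eq eqxx /= mulr0 add0r.
by rewrite eq_sym (negbTE Hj) mulr0.
Qed.

Lemma B_eq : B_total pq = q + n.+1%:R * (1 - q).
Proof.
rewrite /B_total (bigD1 i0) // [X in _ + X = _]big1 ?addr0; last first.
  move=> i Hi; apply: big1 => j _; rewrite e_rate_eq (eq_sym i0 i) (negbTE Hi) andbF mulr0 add0r.
  by case: (j =P i0) => [->|] /=; rewrite ?mulr0 // (eq_sym i0 i) (negbTE Hi) mulr0.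
rewrite (bigD1 i0) // e_rate_eq eqxx /= mulr0 add0r mulr1.
congr (_ + _).
rewrite (eq_bigr (fun _ => 1 - q)); last first.
  by move=> j Hj; rewrite e_rate_eq Hj eqxx /= mulr1 (negbTE Hj) /= mulr0 addr0.
rewrite sumr_const mulr_natl; congr (_ *+ _).
by rewrite cardC1 card_ord.
Qed.

Lemma rho_overall_eq : 0 <= q < 1 -> rho_overall pq = q / (q + n.+1%:R * (1 - q)).
Proof.
move=> Hq; rewrite /rho_overall B_eq (bigD1 i0) //= big1 ?addr0.
  by rewrite d_i0 rho_i0 // mulr1 mulrC.
by move=> j Hj; rewrite rho_j // mulr0.
Qed.

Lemma rule_ok : 0 <= q <= 1 -> is_replacement_rule pq.
Proof.
move=> /andP [q0 q1]; split.
  move=> ev; rewrite ffunE addr_ge0 // mulr_ge0 ?subr_ge0 //.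
by rewrite (sum_pq predT) /= !mulr1 subrK.
Qed.

Lemma fix_ok : q < 1 -> fixation_assumption pq.
Proof.
move=> q1; exists i0, [:: ev0]; split.
  move=> ev; rewrite inE => /eqP ->.
  by rewrite ffunE eqxx (negbTE ev0A) mulr1 mulr0 addr0 subr_gt0.
move=> s j /=; rewrite /apply_events /= ffunE /= !inE ffunE.
by case: ifP => // /negbFE /eqP ->.
Qed.
End Constr.

Theorem mainTheorem4 (R : realType) (N : nat) (u : R) :
  (2 <= N)%N -> 0 < u ->
  (forall x : R, 0 <= x < 1 ->
     exists p : {ffun event N -> R},
       [/\ is_replacement_rule p, fixation_assumption p & rho_overall p = x]) /\
  (forall K : R, 0 <= K < N%:R * u ->
     exists p : {ffun event N -> R},
       [/\ is_replacement_rule p, fixation_assumption p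
         & N%:R * u * rho_overall p = K]).
Proof.
move=> HN u0; case: N HN => [|[|n]] // _.
have part1 : forall x : R, 0 <= x < 1 ->
     exists p : {ffun event n.+2 -> R},
       [/\ is_replacement_rule p, fixation_assumption p & rho_overall p = x].
  move=> x /andP [x0 x1].
  have d0 : 0 < 1 + x * n%:R by rewrite ltr_wpDr // mulr_ge0.
  set q := x * n.+1%:R / (1 + x * n%:R).
  have q0 : 0 <= q by rewrite divr_ge0 ?mulr_ge0 // ltW.
  have q1 : q < 1.
    rewrite ltr_pdivrMr // mul1r -natr1 mulrDr mulr1 addrC ltrD2r //.
  have qq : 0 <= q < 1 by rewrite q0 q1.
  exists (@pq R n q); split.
  - by apply: rule_ok; rewrite q0 ltW.
  - exact: fix_ok.
  rewrite rho_overall_eq //.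
  have -> : q + n.+1%:R * (1 - q) = n.+1%:R / (1 + x * n%:R).
    rewrite /q; field; exact: lt0r_neq0.
  rewrite /q; field; apply/andP; split; exact: lt0r_neq0.
split => // K /andP [K0 K1].
have Nu : 0 < n.+2%:R * u by rewrite mulr_gt0.
have Hx : 0 <= K / (n.+2%:R * u) < 1.
  apply/andP; split; first by apply: divr_ge0 => //; apply: ltW.
  by rewrite ltr_pdivrMr // mul1r.
have [p [H1 H2 H3]] := part1 _ Hx.
exists p; split => //; rewrite H3; field; rewrite lt0r_neq0 //= ltr_wpDr //.
Qed.
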